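(* Let $n\ge 1$ and $p\in(0,1)^n$. Let $Y\in\{0,1\}$ be a random bit with $\mathbb{P}(Y=1)=\mathbb{P}(Y=0)=1/2$, and conditionally on $Y$ let $X_1,\ldots,X_n\in\{0,1\}$ be independent with $\mathbb{P}(X_i=1\mid Y=1)=\mathbb{P}(X_i=0\mid Y=0)=p_i$. Let $f^{\mathrm{OPT}}:\{0,1\}^n\to\{0,1\}$ be a decision rule minimizing $\mathbb{P}(f(X)\neq Y)$ over all $f:\{0,1\}^n\to\{0,1\}$, where $X=(X_1,\ldots,X_n)$. Let $w_i=\log\frac{p_i}{1-p_i}$. Then $$\mathbb{P}(f^{\mathrm{OPT}}(X)\neq Y)\ge\frac12\cdot 2^n\sqrt{\prod_{i=1}^n p_i(1-p_i)}\cdot\exp\Big(-\frac12\sqrt{\sum_{i=1}^n w_i^2}\Big).$$ *)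

(* Defs.v *)
From mathcomp Require Import all_boot all_order all_algebra.
From mathcomp Require Import all_classical all_reals all_analysis.
Set Implicit Arguments. Unset Strict Implicit. Unset Printing Implicit Defensive.
Import Order.TTheory GRing.Theory Num.Theory.
Local Open Scope ring_scope.

(* Joint law of (X, Y): Y uniform on {0,1} (bool: true = 1), and conditionally on Y
   the X_i are independent with P(X_i = Y | Y) = p_i.
   joint p x y = P(X = x, Y = y). *)
Definition joint {R : realType} {n : nat} (p : 'I_n -> R)
  (x : {ffun 'I_n -> bool}) (y : bool) : R :=
  2^-1 * \prod_(i < n) (if x i == y then p i else 1 - p i).

Definition err {R : realType} {n : nat} (p : 'I_n -> R)
  (f : {ffun 'I_n -> bool} -> bool) : R :=
  \sum_(y : bool) \sum_(x : {ffun 'I_n -> bool}) joint p x y * (f x != y)%:R.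

Definition weight {R : realType} {n : nat} (p : 'I_n -> R) (i : 'I_n) : R :=
  ln (p i / (1 - p i)).

(* Main.v *)
Require Import Defs.
From mathcomp Require Import all_boot all_order all_algebra.
From mathcomp Require Import all_classical all_reals all_analysis.
From mathcomp Require Import ring lra.
Import Order.TTheory GRing.Theory Num.Theory.
Local Open Scope ring_scope.

Lemma prod_expR (R : realType) (I : finType) (q : I -> R) :
  (forall i, 0 < q i) -> \prod_i q i = expR (\sum_i ln (q i)).
Proof.
move=> hq; apply: (big_rec2 (fun a b => a = expR b)); first by rewrite expR0.
by move=> i y z _ ->; rewrite expRD lnK // posrE.
Qed.

Definition sgn (R : realType) {n : nat} (x : {ffun 'I_n -> bool}) (i : 'I_n) : R :=
  if x i then 1 else -1.

Definition flip {n : nat} (i : 'I_n) (x : {ffun 'I_n -> bool}) : {ffun 'I_n -> bool} :=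
  [ffun k => if k == i then ~~ x k else x k].

Lemma flipK n i : involutive (@flip n i).
Proof. by move=> x; apply/ffunP => k; rewrite !ffunE; case: eqP => // _; rewrite negbK. Qed.

Lemma sgn_orth (R : realType) n (i j : 'I_n) : i != j ->
  \sum_(x : {ffun 'I_n -> bool}) sgn R x i * sgn R x j = 0.
Proof.
move=> hij; have hji : (j == i) = false by apply/negbTE; rewrite eq_sym.
set S := (X in X = 0).
have : S = - S.
  rewrite {1}/S (reindex_inj (inv_inj (@flipK n i))) /S -sumrN.
  apply: eq_bigr => x _; rewrite /sgn !ffunE eqxx hji.
  by case: (x i); rewrite /= ?mulN1r ?mul1r ?opprK.
by move=> h; lra.
Qed.

Lemma sum_sq (R : realType) n (w : 'I_n -> R) :
  \sum_(x : {ffun 'I_n -> bool}) (\sum_i sgn R x i * w i) ^+ 2 =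
  #|{ffun 'I_n -> bool}|%:R * \sum_i w i ^+ 2.
Proof.
under eq_bigr => x _ do rewrite expr2 big_distrl /=.
under eq_bigr => x _ do under eq_bigr => i _ do rewrite big_distrr /=.
rewrite exchange_big /= mulr_sumr; apply: eq_bigr => i _.
rewrite exchange_big /= (bigD1 i) //= [X in _ + X]big1 ?addr0; last first.
  move=> j hji.
  under eq_bigr => x _ do rewrite mulrACA; rewrite -big_distrl /= sgn_orth ?mul0r //.
  by rewrite eq_sym.
under eq_bigr => x _ do rewrite mulrACA -expr2 -expr2 /sgn; rewrite -big_distrl /=.
congr (_ * _).
under eq_bigr => x _ do (have -> : (if x i then 1 else -1 : R) ^+ 2 = 1 by case: (x i); rewrite ?expr1n ?sqrrN ?expr1n).
by rewrite sumr_const.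
Qed.

Theorem theorem4 (R : realType) (n : nat) (hn : (1 <= n)%N) (p : 'I_n -> R)
  (hp : forall i, 0 < p i < 1)
  (fopt : {ffun 'I_n -> bool} -> bool)
  (hopt : forall f : {ffun 'I_n -> bool} -> bool, err p fopt <= err p f) :
  2^-1 * 2 ^+ n * Num.sqrt (\prod_(i < n) (p i * (1 - p i)))
    * expR (- (2^-1 * Num.sqrt (\sum_(i < n) weight p i ^+ 2)))
  <= err p fopt.
Proof.
have hp0 i : 0 < p i by case/andP: (hp i).
have hp1 i : 0 < 1 - p i by case/andP: (hp i) => _; rewrite subr_gt0.
pose L (x : {ffun 'I_n -> bool}) (y : bool) :=
  \sum_i ln (if x i == y then p i else 1 - p i).
pose C := \sum_i (ln (p i) + ln (1 - p i)).
pose D (x : {ffun 'I_n -> bool}) := \sum_i sgn R x i * weight p i.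
pose N : R := #|{ffun 'I_n -> bool}|%:R.
pose s := Num.sqrt (\sum_(i < n) weight p i ^+ 2).
have hjoint x y : joint p x y = 2^-1 * expR (L x y).
  by rewrite /joint prod_expR // => i; case: ifP.
have hLsum x : L x true + L x false = C.
  rewrite /L -big_split; apply: eq_bigr => i _; case: (x i) => /=; lra.
have hLdif x : L x true - L x false = D x.
  rewrite /L -sumrB; apply: eq_bigr => i _.
  rewrite /sgn /weight ln_div ?posrE //; case: (x i) => /=; lra.
pose g x := (C - `|D x|) / 2.
have hg x y : g x <= L x y.
  have := ler_norm (D x); have := ler_norm (- D x); rewrite normrN.
  have := hLsum x; have := hLdif x; rewrite /g; case: y; lra.
have herr : \sum_x 2^-1 * expR (g x) <= err p fopt.
  rewrite /err exchange_big /=; apply: ler_sum => x _; rewrite big_bool /=.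
  case: (fopt x) => /=; rewrite !hjoint /= ?mulr0 ?mulr1 ?add0r ?addr0;
    by apply: ler_wpM2l; [lra | rewrite ler_expR].
have hs0 : 0 <= s by apply: sqrtr_ge0.
have hS : \sum_(i < n) weight p i ^+ 2 = s ^+ 2.
  by rewrite sqr_sqrtr // sumr_ge0 // => i _; apply: sqr_ge0.
have hsq : \sum_x D x ^+ 2 = N * s ^+ 2 by rewrite -hS sum_sq.
have hN0 : 0 <= N by apply: ler0n.
have hD : \sum_x `|D x| <= N * s.
  have [s0|spos] := eqVneq s 0.
    rewrite s0 mulr0 expr0n /= mulr0 in hsq *.
    rewrite le_eqVlt; apply/orP; left; apply/eqP; apply: big1 => x _.
    have := @psumr_eq0P _ _ predT (fun x => D x ^+ 2) (fun x _ => sqr_ge0 (D x)) hsq x isT.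
    by move/eqP; rewrite sqrf_eq0 => /eqP ->; rewrite normr0.
  have sp : 0 < s by rewrite lt_def spos hs0.
  rewrite -(ler_pM2l (_ : 0 < 2 * s)); last by rewrite mulr_gt0.
  apply: (@le_trans _ _ (\sum_x (D x ^+ 2 + s ^+ 2))).
    rewrite mulr_sumr; apply: ler_sum => x _.
    have := sqr_ge0 (`|D x| - s); rewrite sqrrB real_normK ?num_real //.
    lra.
  rewrite big_split /= hsq sumr_const -/N.
  rewrite -[_ *+ _]mulr_natr /N; lra.
pose m := C / 2 + - (2^-1 * s).
have htan x : expR m * (1 + (g x - m)) <= expR (g x).
  rewrite [in X in _ <= X](_ : g x = m + (g x - m)); last by rewrite addrC subrK.
  by rewrite (expRD m); apply: ler_wpM2l; [apply: expR_ge0 | apply: expR_ge1Dx].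
have hsum : N <= \sum_x (1 + (g x - m)).
  have -> : \sum_x (1 + (g x - m)) = \sum_x ((1 + s / 2) - `|D x| / 2).
    by apply: eq_bigr => x _; rewrite /g /m; lra.
  rewrite sumrB sumr_const -mulr_suml -[_ *+ _]mulr_natr -/N; lra.
have hC : Num.sqrt (\prod_(i < n) (p i * (1 - p i))) = expR (C / 2).
  rewrite prod_expR; last by move=> i; rewrite mulr_gt0.
  have -> : \sum_i ln (p i * (1 - p i)) = C / 2 + C / 2.
    rewrite /C -splitr; apply: eq_bigr => i _; rewrite lnM // posrE //.
  by rewrite expRD -expr2 sqrtr_sqr ger0_norm // expR_ge0.
have hN : N = 2 ^+ n by rewrite /N card_ffun card_bool card_ord natrX.
apply: le_trans herr.
apply: (@le_trans _ _ (\sum_x 2^-1 * (expR m * (1 + (g x - m))))); last first.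
  apply: ler_sum => x _; apply: ler_wpM2l => //; lra.
rewrite -mulr_sumr -mulr_sumr hC -hN -/s /m expRD.
have := expR_ge0 (C / 2); have := expR_ge0 (- (2^-1 * s)).
move=> h1 h2.
have -> : 2^-1 * N * expR (C / 2) * expR (- (2^-1 * s)) =
  2^-1 * (expR (C / 2) * expR (- (2^-1 * s)) * N) by ring.
apply: ler_wpM2l; first lra.
by apply: ler_wpM2l => //; apply: mulr_ge0.
Qed.
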